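(* Let $f$ be a biderivation of $\mathcal{SV}(0)$, and let $\phi,\psi:\mathcal{SV}(0)\to\mathcal{SV}(0)$ be linear maps and $\rho_1,\rho_2,\rho_3,\theta_1,\theta_2,\theta_3$ linear complex-valued functions on $\mathcal{SV}(0)$ such that for all $x,y$, $$f(x,y)=\sum_{i=1}^3\rho_i(x)D_i(y)+[\phi(x),y]=\sum_{i=1}^3\theta_i(y)D_i(x)+[x,\psi(y)].$$ Then there exist $\lambda\in\mathbb{C}$, numbers $s_0^{(m)},e_0^{(m)}\in\mathbb{C}$ ($m\in\mathbb{Z}$), and a family $\{\mu_k\in\mathbb{C}\mid k\in\mathbb{Z}\}$ with only finitely many nonzero $\mu_k$, such that for every $m\in\mathbb{Z}$ $$\phi(L_m)=\lambda L_m+\sum_{k\in\mathbb{Z}\setminus\{-m\}}\frac{\mu_k}{m+k}M_{m+k}+s_0^{(m)}M_0,\qquad \psi(L_m)=\lambda L_m-\sum_{k\in\mathbb{Z}\setminus\{-m\}}\frac{\mu_k}{m+k}M_{m+k}+e_0^{(m)}M_0.$$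
   Context: $\mathcal{SV}(0)$ is the complex Lie algebra with basis $\{L_i,Y_i,M_i\mid i\in\mathbb{Z}\}$ and brackets $[L_m,L_n]=(m-n)L_{m+n}$, $[L_m,Y_n]=(\frac12 m-n)Y_{m+n}$, $[L_m,M_n]=-nM_{m+n}$, $[Y_m,Y_n]=(m-n)M_{m+n}$, $[Y_m,M_n]=[M_m,M_n]=0$. A biderivation of a Lie algebra $L$ is a bilinear map $f:L\times L\to L$ with $f([x,y],z)=[x,f(y,z)]+[f(x,z),y]$ and $f(x,[y,z])=[f(x,y),z]+[y,f(x,z)]$ for all $x,y,z\in L$. The linear maps $D_1,D_2,D_3$ are defined by $D_1(L_m)=M_m$, $D_1(Y_m)=D_1(M_m)=0$; $D_2(L_m)=mM_m$, $D_2(Y_m)=D_2(M_m)=0$; $D_3(L_m)=0$, $D_3(Y_m)=Y_m$, $D_3(M_m)=2M_m$. *)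

(* Defs.v *)
From HB Require Import structures.
From mathcomp Require Import all_boot all_order all_algebra.
From mathcomp Require Import complex.
From mathcomp Require Import Rstruct.
From mathcomp Require Import finmap.
From mathcomp.multinomials Require Import monalg.

Set Implicit Arguments.
Unset Strict Implicit.
Unset Printing Implicit Defensive.

Import GRing.Theory Num.Theory.
Local Open Scope ring_scope.

Definition C : fieldType := complex Rdefinitions.R.

(* basis indices: inl (inl m) = L_m, inl (inr m) = Y_m, inr m = M_m *)
Definition B := (int + int + int)%type.

Definition V : lmodType C := {malg C[B]}.

Definition Lb (m : int) : V := << inl (inl m) >>.
Definition Yb (m : int) : V := << inl (inr m) >>.
Definition Mb (m : int) : V := << inr m >>.

Definition ext (g : B -> V) (x : V) : V :=
  \sum_(k <- finmap.enum_fset (msupp x)) x@_k *: g k.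

Definition brB (a b : B) : V :=
  match a, b with
  | inl (inl m), inl (inl n) => (m - n)%:~R *: Lb (m + n)
  | inl (inl m), inl (inr n) => (m%:~R / 2 - n%:~R) *: Yb (m + n)
  | inl (inl m), inr n => (- n%:~R) *: Mb (m + n)
  | inl (inr m), inl (inl n) => (- (n%:~R / 2 - m%:~R)) *: Yb (m + n)
  | inl (inr m), inl (inr n) => (m - n)%:~R *: Mb (m + n)
  | inl (inr _), inr _ => 0
  | inr m, inl (inl n) => m%:~R *: Mb (m + n)
  | inr _, inl (inr _) => 0
  | inr _, inr _ => 0
  end.

Definition br (x y : V) : V := ext (fun a => ext (brB a) y) x.

Definition D1 : V -> V := ext (fun a => match a with
  | inl (inl m) => Mb m | _ => 0 end).
Definition D2 : V -> V := ext (fun a => match a with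
  | inl (inl m) => m%:~R *: Mb m | _ => 0 end).
Definition D3 : V -> V := ext (fun a => match a with
  | inl (inl _) => 0 | inl (inr m) => Yb m | inr m => 2%:R *: Mb m end).

Definition bilinear_map (f : V -> V -> V) : Prop :=
  (forall (a : C) (x x' y : V), f (a *: x + x') y = a *: f x y + f x' y) /\
  (forall (a : C) (x y y' : V), f x (a *: y + y') = a *: f x y + f x y').

Definition biderivation (f : V -> V -> V) : Prop :=
  bilinear_map f /\
  (forall x y z : V, f (br x y) z = br x (f y z) + br (f x z) y) /\
  (forall x y z : V, f x (br y z) = br (f x y) z + br y (f x z)).

(* Main.v *)
Require Import Defs.
From HB Require Import structures.
From mathcomp Require Import all_boot all_order all_algebra.
From mathcomp Require Import complex.
From mathcomp Require Import Rstruct.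
From mathcomp Require Import finmap.
From mathcomp.multinomials Require Import monalg.
From mathcomp Require Import ring lra zify.
Import GRing.Theory Num.Theory.
Local Open Scope ring_scope.

Lemma ext_basis (g : B -> V) (b : B) : ext g << b >> = g b.
Proof.
rewrite /ext msuppU oner_eq0 /=.
by rewrite big_seq_fset1 mcoeffUU scale1r.
Qed.

Lemma ext_coeff (g : B -> V) (x : V) (c h : B) :
  (forall a, a != h -> (g a)@_c = 0) -> (ext g x)@_c = x@_h * (g h)@_c.
Proof.
move=> H; rewrite /ext raddf_sum.
rewrite /=; under eq_bigr => k _ do rewrite mcoeffZ.
have [hin|hout] := boolP (h \in enum_fset (msupp x)).
  rewrite (bigD1_seq h) //=; last exact: fset_uniq.
  rewrite big1 ?addr0 // => k hk; by rewrite H ?mulr0.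
rewrite big1 ?(mcoeff_outdom hout) ?mul0r // => k _.
have [->|hk] := eqVneq k h; first by rewrite (mcoeff_outdom hout) mul0r.
by rewrite H ?mulr0.
Qed.


Notation LL p := (inl (inl p) : B).
Notation YY p := (inl (inr p) : B).
Notation MM p := (inr p : B).

Lemma cU (a c : B) : (<< a >> : V)@_c = (a == c)%:R.
Proof. by rewrite mcoeffU. Qed.

Lemma eqLL (a b : int) : (LL a == LL b) = (a == b). Proof. by []. Qed.
Lemma eqYY (a b : int) : (YY a == YY b) = (a == b). Proof. by []. Qed.
Lemma eqMM (a b : int) : (MM a == MM b) = (a == b). Proof. by []. Qed.

Lemma cL_brL x n p : (br x (Lb n))@_(LL p) = x@_(LL (p-n)) * ((p-n) - n)%:~R.
Proof.
rewrite /br (@ext_coeff _ _ _ (LL (p-n))).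
  rewrite /Lb ext_basis /= mcoeffZ cU.
  by rewrite /= subrK eqxx mulr1 mulrC.
move=> [[j|j]|j] hj; rewrite /Lb ext_basis /= /Lb /Yb /Mb mcoeffZ cU //= ?mulr0 //.
rewrite eqLL eqLL in hj *.
have -> : (j + n == p) = false.
  apply/negbTE; apply: contra hj => /eqP <-. by rewrite addrK.
by rewrite mulr0.
Qed.

Lemma cY_brL x n p : (br x (Lb n))@_(YY p) = x@_(YY (p-n)) * (-(n%:~R / 2 - (p-n)%:~R)).
Proof.
rewrite /br (@ext_coeff _ _ _ (YY (p-n))).
  rewrite /Lb ext_basis /= mcoeffZ cU.
  by rewrite /= subrK eqxx mulr1 mulrC.
move=> [[j|j]|j] hj; rewrite /Lb ext_basis /= /Lb /Yb /Mb mcoeffZ cU //= ?mulr0 //.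
rewrite eqYY eqYY in hj *.
have -> : (j + n == p) = false.
  apply/negbTE; apply: contra hj => /eqP <-. by rewrite addrK.
by rewrite mulr0.
Qed.

Lemma cM_brL x n p : (br x (Lb n))@_(MM p) = x@_(MM (p-n)) * (p-n)%:~R.
Proof.
rewrite /br (@ext_coeff _ _ _ (MM (p-n))).
  rewrite /Lb ext_basis /= mcoeffZ cU.
  by rewrite /= subrK eqxx mulr1 mulrC.
move=> [[j|j]|j] hj; rewrite /Lb ext_basis /= /Lb /Yb /Mb mcoeffZ cU //= ?mulr0 //.
rewrite eqMM eqMM in hj *.
have -> : (j + n == p) = false.
  apply/negbTE; apply: contra hj => /eqP <-. by rewrite addrK.
by rewrite mulr0.
Qed.

Lemma cL_Lbr m y p : (br (Lb m) y)@_(LL p) = y@_(LL (p-m)) * (m - (p-m))%:~R.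
Proof.
rewrite /br /Lb ext_basis /= (@ext_coeff _ _ _ (LL (p-m))).
  rewrite /= mcoeffZ cU.
  by rewrite /= (addrC m (p - m)) subrK eqxx mulr1.
move=> [[j|j]|j] hj; rewrite /= /Lb /Yb /Mb ?mcoeffZ ?mcoeff0 ?cU //= ?mulr0 //.
rewrite eqLL eqLL in hj *.
have -> : (m + j == p) = false.
  apply/negbTE; apply: contra hj => /eqP <-. by rewrite (addrC m) addrK.
by rewrite mulr0.
Qed.

Lemma cY_Lbr m y p : (br (Lb m) y)@_(YY p) = y@_(YY (p-m)) * (m%:~R / 2 - (p-m)%:~R).
Proof.
rewrite /br /Lb ext_basis /= (@ext_coeff _ _ _ (YY (p-m))).
  rewrite /= mcoeffZ cU.
  by rewrite /= (addrC m (p - m)) subrK eqxx mulr1.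
move=> [[j|j]|j] hj; rewrite /= /Lb /Yb /Mb ?mcoeffZ ?mcoeff0 ?cU //= ?mulr0 //.
rewrite eqYY eqYY in hj *.
have -> : (m + j == p) = false.
  apply/negbTE; apply: contra hj => /eqP <-. by rewrite (addrC m) addrK.
by rewrite mulr0.
Qed.

Lemma cM_Lbr m y p : (br (Lb m) y)@_(MM p) = y@_(MM (p-m)) * (- (p-m)%:~R).
Proof.
rewrite /br /Lb ext_basis /= (@ext_coeff _ _ _ (MM (p-m))).
  rewrite /= mcoeffZ cU.
  by rewrite /= (addrC m (p - m)) subrK eqxx mulr1.
move=> [[j|j]|j] hj; rewrite /= /Lb /Yb /Mb ?mcoeffZ ?mcoeff0 ?cU //= ?mulr0 //.
rewrite eqMM eqMM in hj *.
have -> : (m + j == p) = false.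
  apply/negbTE; apply: contra hj => /eqP <-. by rewrite (addrC m) addrK.
by rewrite mulr0.
Qed.

Lemma D1L n : D1 (Lb n) = Mb n. Proof. by rewrite /D1 /Lb ext_basis. Qed.
Lemma D2L n : D2 (Lb n) = n%:~R *: Mb n. Proof. by rewrite /D2 /Lb ext_basis. Qed.
Lemma D3L n : D3 (Lb n) = 0. Proof. by rewrite /D3 /Lb ext_basis. Qed.

Lemma cZU (a : C) (b c : B) : (a *: (<< b >> : V))@_c = a * (b == c)%:R.
Proof. by rewrite mcoeffZ cU. Qed.

Lemma intr_neq0 (k : int) : k != 0 -> (k%:~R : C) != 0.
Proof. by rewrite /C intr_eq0. Qed.


Lemma cZL (a : C) m c : (a *: Lb m)@_c = a * (LL m == c)%:R.
Proof. by rewrite /Lb cZU. Qed.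
Lemma cZM (a : C) m c : (a *: Mb m)@_c = a * (MM m == c)%:R.
Proof. by rewrite /Mb cZU. Qed.

Lemma sum_coeff (mu : int -> C) S m c : uniq S -> (forall k, k \notin S -> mu k = 0) ->
  (\sum_(k <- S | m + k != 0) (mu k / (m + k)%:~R) *: Mb (m + k))@_c =
  if c is inr j then (if j == 0 then 0 else mu (j - m) / j%:~R) else 0.
Proof.
move=> uS muS; rewrite raddf_sum /=.
case: c => [[j|j]|j].
- by rewrite big1 // => k _; rewrite cZM mulr0.
- by rewrite big1 // => k _; rewrite cZM mulr0.
under eq_bigr => k _ do rewrite cZM eqMM.
have [->|j0] := eqVneq j 0.
  rewrite big1 // => k hk; by rewrite (negbTE hk) mulr0.
rewrite big_mkcond /=.
have [jS|jS] := boolP (j - m \in S).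
  rewrite (bigD1_seq (j - m)) //= (addrC m (j - m)) subrK j0 eqxx mulr1 big1 ?addr0 // => k hk.
  case: ifP => // _; have -> : (m + k == j) = false.
    by apply/negbTE; apply: contra hk => /eqP <-; rewrite (addrC m) addrK.
  by rewrite mulr0.
rewrite muS // mul0r big1 // => k _; case: ifP => // _.
case: eqP => [e|]; last by rewrite mulr0.
by move: jS; rewrite -e (addrC m) addrK => /muS ->; rewrite mul0r mul0r.
Qed.

Opaque Lb Mb Yb.

Lemma rhs_p (lam s0 : C) (mu : int -> C) S m c : uniq S -> (forall k, k \notin S -> mu k = 0) ->
  (lam *: Lb m + \sum_(k <- S | m + k != 0) (mu k / (m + k)%:~R) *: Mb (m + k) + s0 *: Mb 0)@_c
  = match c with inl (inl j) => if j == m then lam else 0 | inl (inr _) => 0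
      | inr j => if j == 0 then s0 else mu (j - m) / j%:~R end.
Proof.
move=> uS muS.
rewrite mcoeffD mcoeffD.
rewrite sum_coeff //.
rewrite [X in X + _ + _ = _]cZL [X in _ + X = _]cZM.
case: c => [[j|j]|j]; rewrite ?eqLL ?eqMM /= ?mulr0 ?addr0 ?add0r //.
- by rewrite eq_sym; case: eqP; rewrite ?mulr1 ?mulr0.
- case: ifP => [/eqP ej|/negbT j0]; first by subst j; rewrite mulr1 add0r.
  by rewrite eq_sym (negbTE j0) mulr0 addr0.
Qed.

Lemma rhs_m (lam s0 : C) (mu : int -> C) S m c : uniq S -> (forall k, k \notin S -> mu k = 0) ->
  (lam *: Lb m - \sum_(k <- S | m + k != 0) (mu k / (m + k)%:~R) *: Mb (m + k) + s0 *: Mb 0)@_c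
  = match c with inl (inl j) => if j == m then lam else 0 | inl (inr _) => 0
      | inr j => if j == 0 then s0 else - (mu (j - m) / j%:~R) end.
Proof.
move=> uS muS.
rewrite mcoeffD mcoeffB.
rewrite sum_coeff //.
rewrite [X in X + _ + _ = _]cZL [X in _ + X = _]cZM.
case: c => [[j|j]|j]; rewrite ?eqLL ?eqMM /= ?mulr0 ?addr0 ?add0r ?subr0 ?oppr0 //.
- by rewrite eq_sym; case: eqP; rewrite ?mulr1 ?mulr0.
- case: ifP => [/eqP ej|/negbT j0]; first by subst j; rewrite oppr0 mulr1 add0r.
  by rewrite eq_sym (negbTE j0) mulr0 addr0.
Qed.

Lemma eqML (a b : int) : (MM a == LL b) = false. Proof. by []. Qed.
Lemma eqMY (a b : int) : (MM a == YY b) = false. Proof. by []. Qed.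

Lemma Dpart (r1 r2 r3 : C) n c :
  (r1 *: D1 (Lb n) + r2 *: D2 (Lb n) + r3 *: D3 (Lb n))@_c = (r1 + r2 * n%:~R) * (MM n == c)%:R.
Proof.
rewrite D1L D2L D3L scaler0 addr0 scalerA -scalerDl cZM.
by rewrite (mulrC r2).
Qed.

Lemma coeffE (r1 r2 r3 t1 t2 t3 : C) (x y : V) m n c :
  r1 *: D1 (Lb n) + r2 *: D2 (Lb n) + r3 *: D3 (Lb n) + br x (Lb n) =
  t1 *: D1 (Lb m) + t2 *: D2 (Lb m) + t3 *: D3 (Lb m) + br (Lb m) y ->
  (r1 + r2 * n%:~R) * (MM n == c)%:R + (br x (Lb n))@_c
  = (t1 + t2 * m%:~R) * (MM m == c)%:R + (br (Lb m) y)@_c.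
Proof.
move=> e.
rewrite -[X in X + _ = _](Dpart r1 r2 r3) -[X in _ = X + _](Dpart t1 t2 t3).
rewrite -[LHS]mcoeffD -[RHS]mcoeffD; exact: (congr1 (mcoeff c) e).
Qed.

Lemma mul_nz0 (x : C) (k : int) : k != 0 -> x * k%:~R = 0 -> x = 0.
Proof. by move=> hk /eqP; rewrite mulf_eq0 (negbTE (intr_neq0 _ hk)) orbF => /eqP. Qed.

Lemma two_neq0 : (2%:R : C) != 0.
Proof. by rewrite /C pnatr_eq0. Qed.

Lemma half_eq (x y : int) : (x%:~R / 2 - y%:~R : C) = (x - 2 * y)%:~R / 2.
Proof.
rewrite intrB intrM /=.
have h2 := two_neq0.
have -> : (2%:~R : C) = 2%:R by [].
by field.
Qed.

Lemma half_nz (x y : int) : x != 2 * y -> (x%:~R / 2 - y%:~R : C) != 0.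
Proof.
move=> h; rewrite half_eq mulf_neq0 ?invr_neq0 ?two_neq0 // intr_neq0 //.
by rewrite subr_eq0.
Qed.

Lemma half_z (x y : int) : x = 2 * y -> (x%:~R / 2 - y%:~R : C) = 0.
Proof. by move=> ->; rewrite half_eq subrr mul0r. Qed.

Lemma pick2 (m0 m1 : int) : exists n : int, n != m0 /\ n != m1.
Proof.
case: (eqVneq (m0 + 1) m1) => h.
  by exists (m0 + 2); split; apply/eqP; lia.
by exists (m0 + 1); split => //; apply/eqP; lia.
Qed.

Lemma core (a a' b b' c c' : int -> int -> C) :
  (forall m n p, a m (p-n) * ((p-n) - n)%:~R = a' n (p-m) * (m-(p-m))%:~R) ->
  (forall m n p, b m (p-n) * (-(n%:~R/2 - (p-n)%:~R)) = b' n (p-m) * (m%:~R/2 - (p-m)%:~R)) ->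
  (forall m n p, p != n -> p != m -> c m (p-n) * (p-n)%:~R = c' n (p-m) * (-(p-m)%:~R)) ->
  (exists S0 : seq int, forall k, k \notin S0 -> c 0 k = 0) ->
  exists (lam : C) (mu : int -> C) (S : seq int),
    uniq S /\ (forall k, k \notin S -> mu k = 0) /\ forall m,
    (forall j, a m j = if j == m then lam else 0) /\ (forall j, b m j = 0) /\
        (forall j, j != 0 -> c m j = mu (j - m) / j%:~R) /\
        (forall j, a' m j = if j == m then lam else 0) /\ (forall j, b' m j = 0) /\
        (forall j, j != 0 -> c' m j = - (mu (j - m) / j%:~R)).
Proof.
move=> EL EY EM [S0 hS0].
have EL' m n j : a m (m+j) * ((m+j) - n)%:~R = a' n (n+j) * (m - (n+j))%:~R.
  have e1 : m + n + j - n = m + j by lia.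
  have e2 : m + n + j - m = n + j by lia.
  by have := EL m n (m+n+j); rewrite e1 e2.
have EY' m n j : b m (m+j) * (-(n%:~R/2 - (m+j)%:~R)) = b' n (n+j) * (m%:~R/2 - (n+j)%:~R).
  have e1 : m + n + j - n = m + j by lia.
  have e2 : m + n + j - m = n + j by lia.
  by have := EY m n (m+n+j); rewrite e1 e2.
have EM' m n k : m + k != 0 -> n + k != 0 ->
    c m (m+k) * (m+k)%:~R = c' n (n+k) * (-(n+k)%:~R).
  move=> h1 h2.
  have e1 : m + n + k - n = m + k by lia.
  have e2 : m + n + k - m = n + k by lia.
  have := EM m n (m+n+k); rewrite e1 e2; apply; apply/eqP; lia.
have diag m n : m != n -> a m m = a' n n.
  move=> hmn; have := EL' m n 0; rewrite !addr0 => /mulIf; apply.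
  by apply: intr_neq0; rewrite subr_eq0.
have adiag m : a m m = a 0 0.
  have [n [h1 h2]] := pick2 m 0.
  rewrite (diag m n) ?(diag 0 n) //; by rewrite eq_sym.
have a'diag n : a' n n = a 0 0.
  have [m [h1 h2]] := pick2 n n.
  by rewrite -(diag m n) // adiag.
have a'off n j : j != 0 -> a' n (n + j) = 0.
  move=> hj; have := EL' (n - j) n j.
  have -> : n - j + j - n = 0 by lia.
  rewrite mulr0 => /esym /mul_nz0; apply; apply/eqP; lia.
have aoff m j : j != 0 -> a m (m + j) = 0.
  move=> hj; have := EL' m (m + j + 1) j; rewrite a'off // mul0r.
  apply: mul_nz0; apply/eqP; lia.
have Y1 t j : t != - (2 * j) -> b' (2 * t + 2 * j) (2 * t + 2 * j + j) = 0.
  move=> /eqP ht; have := EY' t (2 * t + 2 * j) j.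
  rewrite half_z; last by lia.
  rewrite oppr0 mulr0 => /esym /eqP; rewrite mulf_eq0 => /orP [/eqP //|].
  by rewrite (negbTE (half_nz _ _ _)) //; apply/eqP; lia.
have Y2 m j : b m (m + j) = 0.
  have [t [h1 h2]] := pick2 m (- (2 * j)).
  have h1' : t <> m by apply/eqP.
  have h2' : t <> - (2 * j) by apply/eqP.
  have := EY' m (2 * t + 2 * j) j; rewrite Y1 // mul0r => /eqP.
  rewrite mulf_eq0 oppr_eq0 => /orP [/eqP //|].
  by rewrite (negbTE (half_nz _ _ _)) //; apply/eqP; lia.
have Y3 n j : b' n (n + j) = 0.
  have := EY' (2 * (n + j) + 1) n j; rewrite Y2 mul0r => /esym /eqP.
  rewrite mulf_eq0 => /orP [/eqP //|].
  by rewrite (negbTE (half_nz _ _ _)) //; apply/eqP; lia.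
pose mu k := if k == 0 then c 1 1 else c 0 k * k%:~R.
have gconst m k : m + k != 0 -> c m (m + k) * (m + k)%:~R = mu k.
  move=> hmk.
  have hn : (1 - k) + k != 0 by apply/eqP; lia.
  rewrite (EM' m (1 - k) k) //.
  rewrite /mu; case: ifP => [/eqP k0|/negbT k0].
    by subst k; rewrite -(EM' 1 (1 - 0) 0) ?addr0 ?subr0 ?mulr1.
  have h0 : 0 + k != 0 by rewrite add0r.
  by rewrite -(EM' 0 (1 - k) k) // add0r.
exists (a 0 0), mu, (undup (0 :: S0)); split; first exact: undup_uniq.
split.
  move=> k; rewrite mem_undup in_cons negb_or => /andP [k0 kS].
  by rewrite /mu (negbTE k0) hS0 // mul0r.
move=> m; split; [|split; [|split; [|split; [|split]]]].
- move=> j; case: ifP => [/eqP ->|/negbT hj]; first exact: adiag.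
  have e : m + (j - m) = j by lia.
  rewrite -{1}e aoff //; apply/eqP; move: hj => /eqP; lia.
- move=> j; have e : m + (j - m) = j by lia.
  by rewrite -e Y2.
- move=> j hj; have e : m + (j - m) = j by lia.
  have := gconst m (j - m); rewrite e => /(_ hj) <-.
  by rewrite mulfK // intr_neq0.
- move=> j; case: ifP => [/eqP ->|/negbT hj]; first exact: a'diag.
  have e : m + (j - m) = j by lia.
  rewrite -{1}e a'off //; apply/eqP; move: hj => /eqP; lia.
- move=> j; have e : m + (j - m) = j by lia.
  by rewrite -e Y3.
- move=> j hj; have e : m + (j - m) = j by lia.
  have [m0 [h1 h2]] := pick2 (- (j - m)) (- (j - m)).
  have hm0 : m0 + (j - m) != 0 by apply/eqP; move: h1 => /eqP; lia.
  rewrite -(gconst m0 (j - m)) // (EM' m0 m (j - m)) // ?e //.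
  by rewrite mulrN mulNr opprK mulfK // intr_neq0.
Qed.


Lemma coeffE0 (r1 r2 r3 t1 t2 t3 : C) (x y : V) m n c :
  MM n != c -> MM m != c ->
  r1 *: D1 (Lb n) + r2 *: D2 (Lb n) + r3 *: D3 (Lb n) + br x (Lb n) =
  t1 *: D1 (Lb m) + t2 *: D2 (Lb m) + t3 *: D3 (Lb m) + br (Lb m) y ->
  (br x (Lb n))@_c = (br (Lb m) y)@_c.
Proof.
move=> hn hm e; have := coeffE _ _ _ _ _ _ _ _ _ _ c e.
rewrite (negbTE hn).
rewrite (negbTE hm).
rewrite /=.
rewrite !mulr0.
move=> h; exact: (addrI _ h).
Qed.

Theorem lemma3p2 (f : V -> V -> V) (phi psi : {linear V -> V})
  (rho1 rho2 rho3 theta1 theta2 theta3 : {scalar V}) :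
  biderivation f ->
  (forall x y : V, f x y =
     rho1 x *: D1 y + rho2 x *: D2 y + rho3 x *: D3 y + br (phi x) y) ->
  (forall x y : V, f x y =
     theta1 y *: D1 x + theta2 y *: D2 x + theta3 y *: D3 x + br x (psi y)) ->
  exists (lambda : C) (s0 e0 : int -> C) (mu : int -> C) (S : seq int),
    uniq S /\ (forall k : int, k \notin S -> mu k = 0) /\
    forall m : int,
      phi (Lb m) = lambda *: Lb m
                   + \sum_(k <- S | m + k != 0) (mu k / (m + k)%:~R) *: Mb (m + k)
                   + s0 m *: Mb 0 /\
      psi (Lb m) = lambda *: Lb m
                   - \sum_(k <- S | m + k != 0) (mu k / (m + k)%:~R) *: Mb (m + k)
                   + e0 m *: Mb 0.
Proof.
move=> _ H1 H2.
have E m n := etrans (esym (H1 (Lb m) (Lb n))) (H2 (Lb m) (Lb n)).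
have EL m n p : (phi (Lb m))@_(LL (p-n)) * ((p-n) - n)%:~R
              = (psi (Lb n))@_(LL (p-m)) * (m - (p-m))%:~R.
  have h := coeffE0 _ _ _ _ _ _ _ _ _ _ (LL p) isT isT (E m n).
  exact: (etrans (esym (cL_brL _ _ _)) (etrans h (cL_Lbr _ _ _))).
have EY m n p : (phi (Lb m))@_(YY (p-n)) * (-(n%:~R / 2 - (p-n)%:~R))
              = (psi (Lb n))@_(YY (p-m)) * (m%:~R / 2 - (p-m)%:~R).
  have h := coeffE0 _ _ _ _ _ _ _ _ _ _ (YY p) isT isT (E m n).
  exact: (etrans (esym (cY_brL _ _ _)) (etrans h (cY_Lbr _ _ _))).
have EM m n p : p != n -> p != m -> (phi (Lb m))@_(MM (p-n)) * (p-n)%:~R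
              = (psi (Lb n))@_(MM (p-m)) * (- (p-m)%:~R).
  move=> pn pm.
  have hn : MM n != MM p by rewrite eqMM eq_sym.
  have hm : MM m != MM p by rewrite eqMM eq_sym.
  have h := coeffE0 _ _ _ _ _ _ _ _ _ _ (MM p) hn hm (E m n).
  exact: (etrans (esym (cM_brL _ _ _)) (etrans h (cM_Lbr _ _ _))).
have fin : exists S0 : seq int, forall k, k \notin S0 -> (phi (Lb 0))@_(MM k) = 0.
  exists [seq (if b is inr k then k else 0) | b <- enum_fset (msupp (phi (Lb 0)))].
  move=> k hk; apply: mcoeff_outdom; apply: contra hk => hin.
  by apply/mapP; exists (MM k).
have [lam [mu [S [uS [muS hm]]]]] :=
  core (fun m j => (phi (Lb m))@_(LL j)) (fun m j => (psi (Lb m))@_(LL j))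
       (fun m j => (phi (Lb m))@_(YY j)) (fun m j => (psi (Lb m))@_(YY j))
       (fun m j => (phi (Lb m))@_(MM j)) (fun m j => (psi (Lb m))@_(MM j))
       EL EY EM fin.
exists lam, (fun m => (phi (Lb m))@_(MM 0)), (fun m => (psi (Lb m))@_(MM 0)), mu, S.
split => //; split => // m.
have [hA [hB [hC [hA' [hB' hC']]]]] := hm m.
split; apply/malgP => c; apply: esym.
- apply: etrans (rhs_p lam ((phi (Lb m))@_(MM 0)) mu S m c uS muS) _.
  case: c => [[j|j]|j] /=; first exact: esym (hA j).
    exact: esym (hB j).
  case: ifP => [/eqP ej|/negbT j0]; first by subst j.
  exact: esym (hC j j0).
- apply: etrans (rhs_m lam ((psi (Lb m))@_(MM 0)) mu S m c uS muS) _.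
  case: c => [[j|j]|j] /=; first exact: esym (hA' j).
    exact: esym (hB' j).
  case: ifP => [/eqP ej|/negbT j0]; first by subst j.
  exact: esym (hC' j j0).
Qed.
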